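(* Let $i\ge1$, $n=4i$, and let $C$ be a ceiling coalition of the $i$-bit roof game $G_{i\text{-bit}}$ on players $\{1,\dots,n\}$ such that $C$ has at least two distinct direct left-shifts. Let $p\in C$ be a player with $p\ge2$ and $p-1\notin C$ (so that $(C\setminus\{p\})\cup\{p-1\}$ is a direct left-shift of $C$), and let $a$ be such that $p$ is the $a$-th smallest element of $C$. Then $p=2a$.
   Context: Players are $N=\{1,\dots,n\}$ with $n=4i$. A coalition $S'$ is a direct left-shift of $S$ if there is $m\in S$, $2\le m\le n$, $m-1\notin S$, with $S'=(S\setminus\{m\})\cup\{m-1\}$; a left-shift of $S$ is obtained by one or more successive direct left-shifts. For $k\in\{0,1,\dots,2^i-1\}$ with $i$-bit binary representation $b_1b_2\cdots b_i$ ($b_1$ most significant), the $(k,i)$-encoding coalition is $S_{k,i}=\bigcup_{j=1}^{i}B_j$ where $B_j=\{4(j-1)+2,4(j-1)+3\}$ if $b_j=0$ and $B_j=\{4(j-1)+1,4(j-1)+4\}$ if $b_j=1$ (e.g. $S_{2,2}=\{1,4,6,7\}$). The $i$-bit roof game $G_{i\text{-bit}}$ is the simple game on $N$ in which a coalition is winning iff it contains some $S_{k,i}$ or some left-shift of some $S_{k,i}$; it is a canonical linear game whose roof coalitions (minimal winning coalitions all of whose left-shifts... equivalently all of whose right-shifts are losing) are exactly the $S_{k,i}$. A maximal losing coalition is a losing coalition $S$ such that $S\cup\{m\}$ is winning for all $m\notin S$; a ceiling coalition is a maximal losing coalition all of whose left-shifts are winning. *)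

(* Defs.v *)
From mathcomp Require Import all_boot.
Set Implicit Arguments. Unset Strict Implicit. Unset Printing Implicit Defensive.

(* Players N = {1,...,n} are represented as the elements x of 'I_n.+1 with
   1 <= x (so the nat value of an ordinal IS the player number; the ordinal 0
   is not a player). *)

Definition players (n : nat) : {set 'I_n.+1} := [set x : 'I_n.+1 | 0 < val x].

Definition is_coalition (n : nat) (S : {set 'I_n.+1}) : Prop := S \subset players n.

Definition direct_lshift (n : nat) (S S' : {set 'I_n.+1}) : Prop :=
  exists (m m' : 'I_n.+1),
    [/\ m \in S, 2 <= val m, val m' = (val m).-1, m' \notin S
      & S' = m' |: (S :\ m)].

Inductive lshift (n : nat) (S : {set 'I_n.+1}) : {set 'I_n.+1} -> Prop :=
  | lshift_one : forall S', direct_lshift S S' -> lshift S S'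
  | lshift_step : forall T S', lshift S T -> direct_lshift T S' -> lshift S S'.

(* j-th bit (j = 1..i, b_1 most significant) of the i-bit representation of k *)
Definition bit (i k j : nat) : bool := odd (k %/ 2 ^ (i - j)).

Definition enc_coalition (i k : nat) : {set 'I_(4 * i).+1} :=
  [set x : 'I_(4 * i).+1 | [exists j : 'I_i,
     let jj := (val j).+1 in
     if bit i k jj
     then (val x == 4 * (jj - 1) + 1) || (val x == 4 * (jj - 1) + 4)
     else (val x == 4 * (jj - 1) + 2) || (val x == 4 * (jj - 1) + 3)]].

Definition roof_winning (i : nat) (S : {set 'I_(4 * i).+1}) : Prop :=
  exists k, k < 2 ^ i /\
    exists T, (T = enc_coalition i k \/ lshift (enc_coalition i k) T) /\ T \subset S.

Definition roof_losing (i : nat) (S : {set 'I_(4 * i).+1}) : Prop :=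
  ~ roof_winning S.

Definition max_losing (i : nat) (S : {set 'I_(4 * i).+1}) : Prop :=
  [/\ is_coalition S, roof_losing S &
      forall m : 'I_(4 * i).+1, m \in players (4 * i) -> m \notin S ->
        roof_winning (m |: S)].

Definition ceiling (i : nat) (S : {set 'I_(4 * i).+1}) : Prop :=
  max_losing S /\ forall S', lshift S S' -> roof_winning S'.

(* Main.v *)
Require Import Defs.
From mathcomp Require Import all_boot.
From mathcomp Require Import zify.
Require Import Defs.
Set Implicit Arguments. Unset Strict Implicit. Unset Printing Implicit Defensive.

Definition cnt (n : nat) (S : {set 'I_n.+1}) (x : nat) : nat :=
  #|[set y in S | val y <= x]|.

Lemma cnt_sum n (S : {set 'I_n.+1}) x : cnt S x = \sum_(y in S) (val y <= x : nat).
Proof.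
rewrite /cnt -sum1_card [LHS]big_mkcond [RHS]big_mkcond /=.
apply: eq_bigr => y _; rewrite !inE; case: (y \in S) => //=; by case: (val y <= x).
Qed.

Lemma cnt_sub n (A B : {set 'I_n.+1}) x : A \subset B -> cnt A x <= cnt B x.
Proof.
move=> AB; apply: subset_leq_card; apply/subsetP => y; rewrite !inE => /andP[yA ->].
by rewrite (subsetP AB).
Qed.

Lemma cnt_mono n (A : {set 'I_n.+1}) x z : x <= z -> cnt A x <= cnt A z.
Proof.
move=> xz; apply: subset_leq_card; apply/subsetP => y; rewrite !inE => /andP[-> yx] /=.
exact: leq_trans yx xz.
Qed.

Lemma cnt_flat n (A : {set 'I_n.+1}) x z : x <= z ->
  (forall o, o \in A -> x < val o -> z < val o) -> cnt A z = cnt A x.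
Proof.
move=> xz H; rewrite /cnt; apply: eq_card => y; rewrite !inE.
case yA: (y \in A) => //=.
case: (leqP (val y) x) => yx; first by rewrite (leq_trans yx xz).
by apply/negbTE; rewrite -ltnNge; apply: H.
Qed.

Lemma cnt_min n (A : {set 'I_n.+1}) x : cnt A x = cnt A (minn x n).
Proof.
rewrite /cnt; apply: eq_card => y; rewrite !inE leq_min.
by have := ltn_ord y; rewrite ltnS => ->; rewrite andbT.
Qed.

Lemma cnt0 n (A : {set 'I_n.+1}) : A \subset players n -> cnt A 0 = 0.
Proof.
move=> AP; apply/eqP; rewrite cards_eq0; apply/eqP; apply/setP => y; rewrite !inE.
case yA: (y \in A) => //=; move: yA; move/subsetP: AP => /(_ y); rewrite inE; case: y => [[|y] ?] //= H H'; by have := H H'.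
Qed.

Lemma cnt_step n (A : {set 'I_n.+1}) (o : 'I_n.+1) :
  0 < val o -> cnt A (val o) = cnt A (val o).-1 + (o \in A).
Proof.
move=> o0; rewrite !cnt_sum.
case oA: (o \in A).
  rewrite (big_setD1 o oA) /= leqnn [in RHS](big_setD1 o oA) /=.
  have -> : (val o <= (val o).-1) = false by lia.
  rewrite add0n addnC; congr (_ + _); apply: eq_bigr => y.
  rewrite !inE => /andP[yo _]; have : val y != val o by [].
  by case: (ltngtP (val y) (val o)) => // H _; [have -> : val y <= (val o).-1 by lia | have -> : (val y <= (val o).-1) = false by lia; have -> : (val y <= val o) = false by lia].
rewrite addn0; apply: eq_bigr => y yA.
have : val y != val o by apply/eqP => /val_inj e; move: oA; rewrite -e yA.
by case: (ltngtP (val y) (val o)) => //; lia.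
Qed.

Lemma cnt_shift n (A : {set 'I_n.+1}) (m m' : 'I_n.+1) x :
  m \in A -> m' \notin A ->
  cnt (m' |: (A :\ m)) x + (val m <= x) = cnt A x + (val m' <= x).
Proof.
move=> mA m'A; rewrite !cnt_sum big_setU1 /=; last by rewrite in_setD1 (negbTE m'A) andbF.
rewrite [\sum_(y in A) _](big_setD1 m mA) /=; set s := \sum_(i in A :\ m) _; set b1 := (_ <= x : nat); set b2 := (_ <= x : nat); lia.
Qed.


Ltac vlia := simpl in *; lia.

Lemma lshift_cons n (A B C : {set 'I_n.+1}) : direct_lshift A B -> lshift B C -> lshift A C.
Proof.
move=> dAB; elim=> [C' dBC | T C' _ IH dTC].
  exact: lshift_step (lshift_one dAB) dBC.
exact: lshift_step IH dTC.
Qed.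

Lemma direct_cnt n (A B : {set 'I_n.+1}) x : direct_lshift A B -> cnt A x <= cnt B x.
Proof.
case=> m [m'] [mA m2 vm' m'A ->].
have := cnt_shift x mA m'A; rewrite vm'.
case: (leqP (val m) x) => h1; case: (leqP (val m).-1 x) => h2 /=; vlia.
Qed.

Lemma lshift_cnt n (A B : {set 'I_n.+1}) x : lshift A B -> cnt A x <= cnt B x.
Proof.
elim=> [B' d | T B' _ IH d]; first exact: direct_cnt.
exact: leq_trans IH (direct_cnt x d).
Qed.

Lemma cnt_pos n (A : {set 'I_n.+1}) (o : 'I_n.+1) x : o \in A -> val o <= x -> 0 < cnt A x.
Proof. by move=> oA ox; apply/card_gt0P; exists o; rewrite inE oA ox. Qed.

Lemma shiftable n (S : {set 'I_n.+1}) : S \subset players n ->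
  forall N (A : {set 'I_n.+1}), \sum_(y in A) val y <= N ->
  (forall x, cnt A x <= cnt S x) -> exists T : {set 'I_n.+1}, T \subset S /\ (T = A \/ lshift A T).
Proof.
move=> SP; elim=> [|N IH] A sA hA.
- case: (boolP (A \subset S)) => [AS|]; first by exists A; split => //; left.
  case/subsetPn => m0 m0A _.
  have := hA 0; rewrite (cnt0 SP) leqn0 cards_eq0 => /eqP /setP /(_ m0).
  rewrite !inE m0A /=; move: sA; rewrite (big_setD1 m0 m0A) /= => h.
  by move: h; rewrite leqn0 addn_eq0 => /andP[/eqP -> _].
case: (boolP (A \subset S)) => [AS|]; first by exists A; split => //; left.
case/subsetPn => m0 m0A m0S.
have m0pos : 0 < val m0.
  case: (posnP (val m0)) => // v0.
  have h0 : val m0 <= 0 by rewrite v0.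
  by have := hA 0; rewrite (cnt0 SP) leqn0 => /eqP e; have := cnt_pos m0A h0; rewrite e.
have ex : exists x, cnt A x < cnt S x.
  case: (ltnP (cnt A (val m0).-1) (cnt S (val m0).-1)) => h; first by exists (val m0).-1.
  have := hA (val m0); rewrite (cnt_step A m0pos) (cnt_step S m0pos) m0A (negbTE m0S).
  by rewrite /= addn1 addn0 => h1; exists (val m0).-1.
case: (ex_minnP ex) => x hx hmin.
have eqbelow : forall y, y < x -> cnt A y = cnt S y.
  move=> y yx; apply/eqP; rewrite eqn_leq hA /=; rewrite leqNgt; apply/negP => /hmin; vlia.
have x0 : 0 < x.
  case: (posnP x) => // x0; by move: hx; rewrite x0 (cnt0 SP).
have xn : x < n.+1.
  rewrite ltnNge; apply/negP => xn.
  have : cnt A n < cnt S n by move: hx; rewrite (cnt_min A x) (cnt_min S x) (minn_idPr _) //; vlia.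
  by move/hmin; vlia.
set ox : 'I_n.+1 := Ordinal xn.
have oxx : val ox = x by [].
have [oxA oxS] : ox \notin A /\ ox \in S.
  have e : cnt A x.-1 = cnt S x.-1 by apply: eqbelow; vlia.
  have := hx; rewrite -oxx (@cnt_step _ A ox x0) (@cnt_step _ S ox x0) oxx e.
  by case: (ox \in A); case: (ox \in S) => //=; rewrite ?addn0 ?addn1 ?ltnn ?ltnSn //; vlia.
have m0x : x < val m0.
  case: (ltngtP x (val m0)) => // h.
    have e : cnt A (m0 : nat).-1 = cnt S (m0 : nat).-1 by apply: eqbelow; vlia.
    have := hA (val m0); rewrite (cnt_step A m0pos) (cnt_step S m0pos) m0A (negbTE m0S).
    by rewrite /= e addn1 addn0 ltnn.
  have e : m0 = ox by apply: val_inj => /=; vlia.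
  by rewrite e oxS in m0S.
set P := fun v => [exists y in A, val y == v] && (x < v).
have exP : exists v, P v by exists (val m0); rewrite /P m0x andbT; apply/existsP; exists m0; rewrite m0A eqxx.
case: (ex_minnP exP) => mv /andP[/existsP[m /andP[mA /eqP vm]] xmv] minmv.
have mvn : mv.-1 < n.+1 by have := ltn_ord m; rewrite vm; vlia.
set m' : 'I_n.+1 := Ordinal mvn.
have m'A : m' \notin A.
  apply/negP => m'A; case: (ltngtP x mv.-1) => h.
  - have : mv <= mv.-1 by apply: minmv; rewrite /P h andbT; apply/existsP; exists m'; rewrite m'A eqxx.
    vlia.
  - vlia.
  - have e : ox = m' by apply: val_inj => /=; vlia.
    by rewrite e m'A in oxA.
set A' := m' |: (A :\ m).
have dA : direct_lshift A A'.
  by exists m, m'; split => //; rewrite ?vm //; vlia.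
have sA' : \sum_(y in A') val y <= N.
  move: sA; rewrite (big_setD1 m mA) /= /A' big_setU1 /=; last by rewrite in_setD1 (negbTE m'A) andbF.
  rewrite vm /=; set s := \sum_(_ in _) _; vlia.
have hA' : forall y, cnt A' y <= cnt S y.
  move=> y; have := cnt_shift y mA m'A; rewrite vm /=.
  case: (eqVneq y mv.-1) => [->|ne].
    rewrite leqnn; have -> : (mv <= mv.-1) = false by vlia.
    rewrite addn0 => ->.
    rewrite (cnt_flat (x:=x)); first last.
    - move=> o oA xo; have : mv <= val o by apply: minmv; rewrite /P xo andbT; apply/existsP; exists o; rewrite oA eqxx.
      vlia.
    - vlia.
    rewrite addn1; apply: leq_trans hx _; apply: cnt_mono; vlia.
  have -> : (mv <= y) = (mv.-1 <= y) by apply/idP/idP; vlia.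
  move/eqP; rewrite eqn_add2r => /eqP ->; exact: hA.
case: (IH A' sA' hA') => T [TS [eT|lT]]; exists T; split => //; right.
  by rewrite eT; exact: lshift_one.
exact: lshift_cons dA lT.
Qed.


Definition F i k x := cnt (enc_coalition i k) x.
Definition H (b : bool) (r : nat) : nat :=
  if b then (if r == 3 then 2 else 1) else (if r == 0 then 0 else if r == 1 then 1 else 2).

Lemma mem_enc i k (o : 'I_(4*i).+1) J r : J < i -> r < 4 -> val o = 4*J + r.+1 ->
  (o \in enc_coalition i k) = (if bit i k J.+1 then (r == 0) || (r == 3) else (r == 1) || (r == 2)).
Proof.
move=> Ji r4 vo; rewrite inE; apply/existsP/idP.
- case=> j /=; rewrite subn1 /= => h.
  have ej : (j:nat) = J by move: h; case: (bit _ _ _) => /orP[] /eqP; vlia.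
  by move: h; rewrite ej; case: (bit _ _ _) => /orP[] /eqP ?; vlia.
- move=> h; exists (Ordinal Ji); rewrite /= subn1 /=.
  by move: h; case: (bit _ _ _) => /orP[] /eqP ?; vlia.
Qed.

Lemma enc_players i k : enc_coalition i k \subset players (4*i).
Proof.
apply/subsetP => o; rewrite !inE => /existsP[j] /=; case: (bit _ _ _) => /orP[] /eqP ?; vlia.
Qed.

Lemma F0 i k : F i k 0 = 0.
Proof. exact: cnt0 (enc_players i k). Qed.

Lemma step_nat n (A : {set 'I_n.+1}) t : t.+1 <= n -> cnt A t.+1 = cnt A t + (inord t.+1 \in A).
Proof.
move=> tn; have e : val (inord t.+1 : 'I_n.+1) = t.+1 by rewrite /= inordK.
by rewrite -[in LHS]e cnt_step e.
Qed.

Lemma F_in_of_full i k J : J < i -> F i k (4*J) = 2*J ->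
  forall r, r < 4 -> F i k (4*J + r.+1) = 2*J + H (bit i k J.+1) r.
Proof.
move=> Ji hF; elim=> [|r IH] r4.
  rewrite addn1 /F step_nat; last by vlia.
  rewrite -/(F i k _) hF (@mem_enc i k _ J 0) //; last by rewrite /= inordK; vlia.
  by case: (bit _ _ _).
rewrite addnS /F step_nat; last by vlia.
rewrite -/(F i k _) IH; last by vlia.
rewrite (@mem_enc i k _ J r.+1) //; last by rewrite /= inordK; vlia.
rewrite -addnA; congr (_ + _).
by case: (bit _ _ _); case: r IH r4 => [|[|[|r]]].
Qed.

Lemma F_full i k J : J <= i -> F i k (4*J) = 2*J.
Proof.
elim: J => [|J IH] Ji; first by rewrite muln0 F0.
have e : 4 * J.+1 = 4*J + 3.+1 by vlia.
rewrite e (F_in_of_full (J:=J)) //; first by rewrite /H; case: (bit _ _ _); vlia.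
by apply: IH; vlia.
Qed.

Lemma F_in i k J r : J < i -> r < 4 -> F i k (4*J + r.+1) = 2*J + H (bit i k J.+1) r.
Proof. move=> Ji r4; apply: F_in_of_full => //; apply: F_full; vlia. Qed.

Lemma bits_exist i (f : nat -> bool) : exists k, k < 2^i /\ forall j, 0 < j <= i -> bit i k j = f j.
Proof.
elim: i => [|i [k [kl hk]]]; first by exists 0; split => // j; vlia.
exists (k.*2 + f i.+1); split.
  rewrite expnS; case: (f i.+1) => /=; vlia.
move=> j /andP[j0 ji]; rewrite /bit.
case: (ltngtP j i.+1) => [lt|gt|->]; last first.
- by rewrite subnn expn0 divn1 oddD odd_double /=; case: (f _).
- vlia.
have e : i.+1 - j = (i - j).+1 by vlia.
rewrite e expnS divnMA.
have -> : (k.*2 + f i.+1) %/ 2 = k.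
  by rewrite -muln2 divnMDl //; case: (f _); rewrite /= ?divn_small ?addn0.
rewrite -(hk j) //; vlia.
Qed.

Lemma win_cnt i (S : {set 'I_(4*i).+1}) : roof_winning S ->
  exists k, k < 2^i /\ forall x, F i k x <= cnt S x.
Proof.
case=> k [kl [T [hT TS]]]; exists k; split => // x.
apply: leq_trans (cnt_sub x TS); case: hT => [->//|l]; exact: lshift_cnt.
Qed.

Lemma cnt_win i (S : {set 'I_(4*i).+1}) k : S \subset players (4*i) -> k < 2^i ->
  (forall x, F i k x <= cnt S x) -> roof_winning S.
Proof.
move=> SP kl h.
have [T [TS hT]] := shiftable SP (leqnn _) h.
by exists k; split => //; exists T; split.
Qed.


Lemma good_of_gap i (Cs : {set 'I_(4*i).+1}) (m m' : 'I_(4*i).+1) :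
  Cs \subset players (4*i) -> ~ roof_winning Cs -> m \in Cs -> 2 <= val m ->
  val m' = (val m).-1 -> m' \notin Cs ->
  roof_winning (m' |: (Cs :\ m)) ->
  exists k, [/\ k < 2^i, F i k (val m') = cnt Cs (val m') + 1 &
                forall y, y != val m' -> F i k y <= cnt Cs y].
Proof.
move=> CP nw mC m2 vm' m'C w.
case: (win_cnt w) => k [kl hk]; exists k.
have hs := fun y => cnt_shift y mC m'C.
have hne : forall y, y != val m' -> F i k y <= cnt Cs y.
  move=> y ne; have := hs y; have := hk y; rewrite vm' in ne *.
  have -> : (val m <= y) = ((val m).-1 <= y) by apply/idP/idP; vlia.
  set b := nat_of_bool _; vlia.
split => //.
have := hk (val m'); have := hs (val m'); rewrite leqnn.
have -> : (val m <= val m') = false by vlia.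
case: (leqP (F i k (val m')) (cnt Cs (val m'))) => h; last by rewrite /=; vlia.
exfalso; apply: nw; apply: (cnt_win CP kl) => y.
by case: (eqVneq y (val m')) => [->//|]; exact: hne.
Qed.

Lemma key_fin b1 b2 r s : r < 4 -> s < 4 -> H b2 r + 1 <= H b1 r -> H b1 s + 1 <= H b2 s ->
  2 * H b1 r = r + 2.
Proof.
by case: b1; case: b2; case: r => [|[|[|[|r]]]]; case: s => [|[|[|[|s]]]].
Qed.

Lemma pair_gap i (Cs : {set 'I_(4*i).+1}) u v k1 k2 :
  Cs \subset players (4*i) -> ~ roof_winning Cs -> 0 < u < 4*i -> 0 < v < 4*i -> u != v ->
  k1 < 2^i -> F i k1 u = cnt Cs u + 1 -> (forall y, y != u -> F i k1 y <= cnt Cs y) ->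
  k2 < 2^i -> F i k2 v = cnt Cs v + 1 -> (forall y, y != v -> F i k2 y <= cnt Cs y) ->
  u.+1 = 2 * (cnt Cs u + 1).
Proof.
move=> CP nw hu hv uv kl1 e1 h1 kl2 e2 h2.
have eu : u = 4 * (u.-1 %/ 4) + (u.-1 %% 4).+1 by vlia.
have ev : v = 4 * (v.-1 %/ 4) + (v.-1 %% 4).+1 by vlia.
set J := u.-1 %/ 4 in eu; set r := u.-1 %% 4 in eu.
set Jv := v.-1 %/ 4 in ev; set s := v.-1 %% 4 in ev.
have r4 : r < 4 by rewrite /r ltn_pmod.
have s4 : s < 4 by rewrite /s ltn_pmod.
have Ji : J < i by vlia.
have Jvi : Jv < i by vlia.
case: (eqVneq J Jv) => [eJ | nJ]; last first.
  exfalso.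
  have [k [kl hk]] := bits_exist i (fun j => if j == J.+1 then bit i k2 j else bit i k1 j).
  apply: nw; apply: (cnt_win CP kl) => y.
  rewrite /F cnt_min [in X in _ <= X]cnt_min -/(F _ _ _).
  have : minn y (4*i) <= 4*i by apply: geq_minr.
  move: (minn y (4*i)) => y'; move=> yi.
  case: (posnP y') => [->|yp]; first by rewrite F0.
  have ey : y' = 4 * (y'.-1 %/ 4) + (y'.-1 %% 4).+1 by vlia.
  set Jy := y'.-1 %/ 4 in ey; set ry := y'.-1 %% 4 in ey.
  have ry4 : ry < 4 by rewrite /ry ltn_pmod.
  have Jyi : Jy < i by vlia.
  rewrite ey F_in // hk; last by vlia.
  case: (eqVneq Jy J) => [eq|ne].
    rewrite eq eqxx -eq -F_in //; rewrite -ey; apply: h2; apply/eqP; vlia.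
  rewrite eqSS (negbTE ne) -F_in //; rewrite -ey; apply: h1; apply/eqP; vlia.
have f1 := e1; have f2 := e2.
have vu : v != u by rewrite eq_sym.
have g1 := h1 v vu; have g2 := h2 u uv.
rewrite eu F_in // -eu in f1; rewrite ev F_in // -ev -eJ in f2.
rewrite ev F_in // -ev -eJ in g1; rewrite eu F_in // -eu in g2.
have := @key_fin (bit i k1 J.+1) (bit i k2 J.+1) r s r4 s4.
vlia.
Qed.


Theorem lemma2 (i : nat) (C : {set 'I_(4 * i).+1}) (p : 'I_(4 * i).+1) (a : nat) :
  1 <= i ->
  ceiling C ->
  (exists S1 S2, [/\ S1 != S2, direct_lshift C S1 & direct_lshift C S2]) ->
  p \in C -> 2 <= val p ->
  (forall q : 'I_(4 * i).+1, val q = (val p).-1 -> q \notin C) ->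
  a = #|[set x in C | val x <= val p]| ->
  val p = 2 * a.
Proof.
move=> i1 [[CP nw _] hsh] [S1 [S2 [ne d1 d2]]] pC p2 hq ->.
have d1' := d1; have d2' := d2.
case: d1' => m1 [m1' [m1C m12 vm1 m1'C eS1]].
case: d2' => m2 [m2' [m2C m22 vm2 m2'C eS2]].
have nm : val m1 != val m2.
  apply/eqP => e; move/eqP: ne; apply.
  have e1 : m1 = m2 by apply: val_inj.
  have e2 : m1' = m2' by apply: val_inj; rewrite vm1 vm2 e.
  by rewrite eS1 eS2 e1 e2.
have pl : (val p).-1 < (4*i).+1 by have := ltn_ord p; vlia.
set p' : 'I_(4*i).+1 := Ordinal pl.
have p'C : p' \notin C by apply: hq.
have dp : direct_lshift C (p' |: (C :\ p)) by exists p, p'; split.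
have vp' : val p' = (val p).-1 by [].
have [kp [klp ep hp]] := good_of_gap CP nw pC p2 vp' p'C (hsh _ (lshift_one dp)).
have w1 : roof_winning (m1' |: (C :\ m1)) by rewrite -eS1; apply: hsh; exact: lshift_one.
have w2 : roof_winning (m2' |: (C :\ m2)) by rewrite -eS2; apply: hsh; exact: lshift_one.
have [k1 [kl1 e1 h1]] := good_of_gap CP nw m1C m12 vm1 m1'C w1.
have [k2 [kl2 e2 h2]] := good_of_gap CP nw m2C m22 vm2 m2'C w2.
have hu : 0 < val p' < 4*i by have := ltn_ord p; rewrite /=; vlia.
have key : (val p').+1 = 2 * (cnt C (val p') + 1).
  case: (eqVneq (val p) (val m1)) => [e|ne1].
    have hv : 0 < val m2' < 4*i by have := ltn_ord m2; rewrite vm2; vlia.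
    apply: (pair_gap CP nw hu hv _ klp ep hp kl2 e2 h2).
    by apply/eqP; rewrite vm2 /= => h; move/eqP: nm; apply; vlia.
  have hv : 0 < val m1' < 4*i by have := ltn_ord m1; rewrite vm1; vlia.
  apply: (pair_gap CP nw hu hv _ klp ep hp kl1 e1 h1).
  by apply/eqP; rewrite vm1 /= => h; move/eqP: ne1; apply; vlia.
have p0 : 0 < val p by vlia.
have ea : #|[set x in C | val x <= val p]| = cnt C (val p) by [].
rewrite ea (cnt_step C p0) pC -key /=; vlia.
Qed.
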